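(* Let $p\ge 0$, let $(\kappa_i)_{i\ge1}$ be a sequence with $C^{-1}i^{-p}\le \kappa_i\le C i^{-p}$ for all $i$ and some $C\ge 1$, let $\mu_0=(\mu_{0,i})_{i\ge1}\in\ell_2$, and for $n\ge 2$ define $h_n:(0,\infty)\to[0,\infty)$ by \[ h_n(\alpha)=\frac{1+2\alpha+2p}{n^{1/(1+2\alpha+2p)}\log n}\sum_{i=1}^{\infty}\frac{n^2 i^{1+2\alpha}\mu_{0,i}^2\log i}{(i^{1+2\alpha}\kappa_i^{-2}+n)^2}. \] For constants $0<l<L$ put \[ \underline{\alpha}_n=\inf\{\alpha>0: h_n(\alpha)>l\}\wedge\sqrt{\log n},\qquad \overline{\alpha}_n=\inf\{\alpha>0: h_n(\alpha)>L(\log n)^2\}. \] Then for any $l,L>0$ the following hold. (i) For all $\beta,R>0$ there exists $c_0>0$ such that $\inf_{\|\mu_0\|_\beta\le R}\underline{\alpha}_n\ge \beta-\frac{c_0}{\log n}$ for all $n$ large enough. (ii) For all $\gamma,R>0$, $\inf_{\|\mu_0\|_{A^\gamma}\le R}\underline{\alpha}_n\ge \frac{\sqrt{\log n}}{\log\log n}$ for all $n$ large enough. (iii) If $\mu_{0,i}\ge c\, i^{-\gamma-1/2}$ for all $i$, for some $c,\gamma>0$, then for a constant $C_0>0$ depending only on $c$ and $\gamma$ we have $\overline{\alpha}_n\le \gamma+C_0\frac{\log\log n}{\log n}$ for all $n$ large enough. (iv) If $\mu_{0,i}\ne 0$ for some $i\ge 2$, then $\overline{\alpha}_n\le \frac{\log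 n}{2\log 2}-\frac12-p$ for all $n$ large enough.
   Context: For $\mu\in\ell_2$ and $\beta,\gamma\ge0$: the Sobolev norm is $\|\mu\|_\beta^2=\sum_{i\ge1} i^{2\beta}\mu_i^2$ and the analytic norm is $\|\mu\|_{A^\gamma}^2=\sum_{i\ge1}e^{2\gamma i}\mu_i^2$. $a\wedge b=\min(a,b)$. The infimum of the empty set is $+\infty$. *)

(* Defs.v *)
From Stdlib Require Import Reals.
From Coquelicot Require Import Coquelicot.
Open Scope R_scope.

(* Sequences indexed by i >= 1 are represented by functions nat -> R;
   the value at index 0 is irrelevant. Sums over i >= 1 are written as
   Series over k of the (S k)-th term. *)

Definition in_l2 (mu : nat -> R) : Prop := ex_series (fun k => (mu (S k))^2).

(* ||mu||_beta <= Rad  (Sobolev norm, +oo if the series diverges) *)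
Definition sobolev_ball (beta Rad : R) (mu : nat -> R) : Prop :=
  ex_series (fun k => Rpower (INR (S k)) (2 * beta) * (mu (S k))^2) /\
  sqrt (Series (fun k => Rpower (INR (S k)) (2 * beta) * (mu (S k))^2)) <= Rad.

(* ||mu||_{A^gamma} <= Rad  (analytic norm, +oo if the series diverges) *)
Definition analytic_ball (gamma Rad : R) (mu : nat -> R) : Prop :=
  ex_series (fun k => exp (2 * gamma * INR (S k)) * (mu (S k))^2) /\
  sqrt (Series (fun k => exp (2 * gamma * INR (S k)) * (mu (S k))^2)) <= Rad.

Definition h_fun (p : R) (kappa mu : nat -> R) (n : nat) (alpha : R) : R :=
  (1 + 2 * alpha + 2 * p) / (Rpower (INR n) (1 / (1 + 2 * alpha + 2 * p)) * ln (INR n)) *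
  Series (fun k =>
    (INR n)^2 * Rpower (INR (S k)) (1 + 2 * alpha) * (mu (S k))^2 * ln (INR (S k)) /
    (Rpower (INR (S k)) (1 + 2 * alpha) * (/ (kappa (S k))^2) + INR n)^2).

(* underline alpha_n = inf{alpha>0 : h_n(alpha) > l} /\ sqrt(log n); inf of empty set = +oo *)
Definition alpha_lower (p : R) (kappa mu : nat -> R) (l : R) (n : nat) : Rbar :=
  Rbar_min (Glb_Rbar (fun alpha => 0 < alpha /\ h_fun p kappa mu n alpha > l))
           (Finite (sqrt (ln (INR n)))).

Definition alpha_upper (p : R) (kappa mu : nat -> R) (L : R) (n : nat) : Rbar :=
  Glb_Rbar (fun alpha => 0 < alpha /\ h_fun p kappa mu n alpha > L * (ln (INR n))^2).

(* Main.v *)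
Require Import Defs.
From Stdlib Require Import Reals Lra Lia Psatz ZArith.
From Coquelicot Require Import Coquelicot.
Open Scope R_scope.

Lemma series_ge_partial (a : nat -> R) (N : nat) :
  (forall k, 0 <= a k) -> ex_series a -> sum_f_R0 a N <= Series a.
Proof.
  intros H E. apply Series_correct in E. apply is_series_Reals in E.
  apply sum_incr; auto.
Qed.

Lemma series_nonneg (a : nat -> R) :
  (forall k, 0 <= a k) -> ex_series a -> 0 <= Series a.
Proof.
  intros H E. apply Rle_trans with (sum_f_R0 a 0); [simpl; apply H|].
  apply series_ge_partial; auto.
Qed.

Lemma series_ge_term (a : nat -> R) (k : nat) :
  (forall k, 0 <= a k) -> ex_series a -> a k <= Series a.
Proof.
  intros H E. apply Rle_trans with (sum_f_R0 a k).
  - destruct k; simpl. lra. pose proof (cond_pos_sum a k H). lra.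
  - apply series_ge_partial; auto.
Qed.

Lemma block_sum (a : nat -> R) (j J : nat) (b : R) :
  (forall k, 0 <= a k) ->
  (forall k, (j < k <= j + J)%nat -> b <= a k) ->
  INR J * b <= sum_f_R0 a (j + J).
Proof.
  intros H0 Hb. induction J.
  - simpl. rewrite Rmult_0_l. apply cond_pos_sum; auto.
  - replace (j + S J)%nat with (S (j + J)) by lia. simpl sum_f_R0.
    rewrite S_INR.
    assert (b <= a (S (j + J))%nat) by (apply Hb; lia).
    assert (INR J * b <= sum_f_R0 a (j + J)).
    { apply IHJ. intros; apply Hb; lia. }
    lra.
Qed.

Lemma ln_le_lin (x : R) : 0 < x -> ln x <= x - 1.
Proof.
  intros Hx. pose proof (exp_ineq1_le (ln x)) as H. rewrite exp_ln in H; auto.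
  lra.
Qed.

Lemma exp_ge_id (y : R) : y <= exp y.
Proof. pose proof (exp_ineq1_le y). lra. Qed.

Lemma ln_nonneg (x : R) : 1 <= x -> 0 <= ln x.
Proof. intros. rewrite <- ln_1. apply ln_le; lra. Qed.

Lemma exp_mono (x y : R) : x <= y -> exp x <= exp y.
Proof. intros [H|H]. left; apply exp_increasing; auto. subst; lra. Qed.
Lemma kappa_bounds (p C x k : R) : 0 <= p -> 1 <= C -> 1 <= x ->
  / C * Rpower x (- p) <= k /\ k <= C * Rpower x (- p) ->
  0 < k /\ Rpower x (2 * p) / C ^ 2 <= / k ^ 2 /\ / k ^ 2 <= C ^ 2 * Rpower x (2 * p)
  /\ k ^ 2 <= C ^ 2.
Proof.
  intros hp hC hx [h1 h2].
  set (r := Rpower x (- p)).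
  assert (rpos : 0 < r) by (unfold r, Rpower; apply exp_pos).
  assert (lnx : 0 <= ln x) by (rewrite <- ln_1; apply ln_le; lra).
  assert (rle1 : r <= 1).
  { unfold r, Rpower. rewrite <- exp_0. apply Rge_le, Rle_ge.
    destruct (Req_dec (-p * ln x) 0) as [e|n]. rewrite e; lra.
    left. apply exp_increasing. nra. }
  assert (E : Rpower x (2 * p) = / r ^ 2).
  { unfold r, Rpower. simpl. rewrite Rmult_1_r, <- exp_plus.
    apply Rmult_eq_reg_l with (exp (- p * ln x + - p * ln x)).
    2: apply Rgt_not_eq, exp_pos.
    rewrite Rinv_r by (apply Rgt_not_eq, exp_pos). rewrite <- exp_plus.
    rewrite <- exp_0. f_equal. ring. }
  assert (Cpos : 0 < C) by lra.
  assert (kpos : 0 < k).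
  { apply Rlt_le_trans with (/ C * r); auto. apply Rmult_lt_0_compat; auto.
    apply Rinv_0_lt_compat; lra. }
  assert (k2lo : (r / C) ^ 2 <= k ^ 2).
  { apply pow_incr. split. unfold Rdiv. apply Rmult_le_pos; [lra| left; apply Rinv_0_lt_compat; lra].
    unfold Rdiv; rewrite Rmult_comm; auto. }
  assert (k2hi : k ^ 2 <= (C * r) ^ 2).
  { apply pow_incr. split; [lra|]. exact h2. }
  rewrite E. split; auto. split; [|split].
  - unfold Rdiv. rewrite <- Rinv_mult. apply Rinv_le_contravar. nra.
    replace (r ^ 2 * C ^ 2) with ((C*r)^2) by ring. auto.
  - replace (C ^ 2 * / r ^ 2) with (/ ((r / C) ^ 2)).
    apply Rinv_le_contravar; auto. apply pow_lt. unfold Rdiv.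
    apply Rmult_lt_0_compat; auto. apply Rinv_0_lt_compat; lra.
    field. split; lra.
  - apply Rle_trans with ((C * r) ^ 2); auto. apply pow_incr. split. nra.
    nra.
Qed.
Definition Tm (n : nat) (alpha x k m : R) : R :=
  (INR n)^2 * Rpower x (1 + 2 * alpha) * m^2 * ln x /
    (Rpower x (1 + 2 * alpha) * (/ k^2) + INR n)^2.

Definition Pf (p : R) (n : nat) (alpha : R) : R :=
  (1 + 2 * alpha + 2 * p) / (Rpower (INR n) (1 / (1 + 2 * alpha + 2 * p)) * ln (INR n)).

Lemma h_fun_eq p kappa mu n alpha :
  h_fun p kappa mu n alpha =
  Pf p n alpha * Series (fun k => Tm n alpha (INR (S k)) (kappa (S k)) (mu (S k))).
Proof. reflexivity. Qed.

Lemma div_le_den (a d0 d : R) : 0 <= a -> 0 < d0 -> d0 <= d -> a / d <= a / d0.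
Proof.
  intros. unfold Rdiv. apply Rmult_le_compat_l; auto. apply Rinv_le_contravar; auto.
Qed.

Lemma Tm_nonneg n alpha x k m : 1 <= INR n -> 1 <= x -> 0 < k -> 0 <= Tm n alpha x k m.
Proof.
  intros hn hx hk. unfold Tm.
  assert (0 < Rpower x (1 + 2 * alpha)) by (unfold Rpower; apply exp_pos).
  assert (0 <= ln x) by (rewrite <- ln_1; apply ln_le; lra).
  assert (0 < / k ^ 2) by (apply Rinv_0_lt_compat; apply pow_lt; auto).
  apply Rmult_le_pos.
  - apply Rmult_le_pos; auto. apply Rmult_le_pos. apply Rmult_le_pos. 
    apply pow_le; lra. lra. apply pow2_ge_0.
  - left. apply Rinv_0_lt_compat. apply pow_lt. nra.
Qed.

Lemma Tm_le_l2 n alpha x k m C : 1 <= INR n -> 1 <= x -> 0 < k -> 0 <= alpha ->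
  k ^ 2 <= C ^ 2 -> 1 <= C ->
  Tm n alpha x k m <= (INR n)^2 * C^4 * m^2.
Proof.
  intros hn hx hk ha hkC hC. unfold Tm.
  set (X := Rpower x (1 + 2 * alpha)).
  assert (Xge : x <= X).
  { unfold X. rewrite <- (Rpower_1 x) at 1 by lra. apply Rle_Rpower; lra. }
  assert (lnx0 : 0 <= ln x) by (rewrite <- ln_1; apply ln_le; lra).
  assert (lnx : ln x <= x) by (pose proof (exp_ineq1_le (ln x)) as HH; rewrite exp_ln in HH; lra).
  assert (ik : / C ^ 2 <= / k ^ 2).
  { apply Rinv_le_contravar; auto. apply pow_lt; auto. }
  assert (Cpos : 0 < / C ^ 2) by (apply Rinv_0_lt_compat, pow_lt; lra).
  apply Rle_trans with ((INR n)^2 * X * m^2 * ln x / (X * / C^2)^2).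
  - apply div_le_den.
    + apply Rmult_le_pos; [|lra]. apply Rmult_le_pos; [|apply pow2_ge_0].
      apply Rmult_le_pos; [apply pow_le; lra| lra].
    + apply pow_lt. apply Rmult_lt_0_compat; lra.
    + apply pow_incr. split. apply Rmult_le_pos; lra.
      assert (X * / C^2 <= X * / k^2) by (apply Rmult_le_compat_l; lra). lra.
  - assert (E : (INR n)^2 * X * m^2 * ln x / (X * / C^2)^2 =
                (INR n)^2 * C^4 * m^2 * (ln x / X)).
    { field. split; lra. }
    rewrite E. rewrite <- (Rmult_1_r ((INR n)^2 * C^4 * m^2)) at 2.
    apply Rmult_le_compat_l.
    + apply Rmult_le_pos; [|apply pow2_ge_0]. apply Rmult_le_pos; apply pow_le; lra.
    + unfold Rdiv. apply Rmult_le_reg_r with X; [lra|].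
      rewrite Rmult_assoc, Rinv_l by lra. lra.
Qed.

Lemma big_N (x : R) : exists N : nat, forall n, (N <= n)%nat -> x <= INR n.
Proof.
  destruct (archimed (Rabs x)) as [h1 h2].
  exists (Z.to_nat (up (Rabs x))). intros n hn.
  apply le_INR in hn. rewrite INR_IZR_INZ in hn. rewrite Z2Nat.id in hn.
  - pose proof (Rle_abs x). lra.
  - apply le_IZR. pose proof (Rabs_pos x). lra.
Qed.

Lemma big_ln (M : R) : exists N : nat, forall n, (N <= n)%nat -> M <= ln (INR n) /\ 1 <= INR n.
Proof.
  destruct (big_N (exp M + 1)) as [N HN]. exists N. intros n hn.
  specialize (HN n hn). pose proof (exp_pos M). split; [|lra].
  rewrite <- (ln_exp M) at 1. apply ln_le; lra.
Qed.

Lemma glb_le_mem (E : R -> Prop) (x y : R) : E x -> x <= y -> Rbar_le (Glb_Rbar E) (Finite y).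
Proof.
  intros hE hxy. destruct (Glb_Rbar_correct E) as [h1 _].
  apply Rbar_le_trans with (Finite x); [apply h1; auto| simpl; auto].
Qed.

Lemma glb_ge (E : R -> Prop) (y : R) : (forall x, E x -> y <= x) -> Rbar_le (Finite y) (Glb_Rbar E).
Proof.
  intros h. destruct (Glb_Rbar_correct E) as [_ h2]. apply h2.
  intros x hx. simpl. apply h; auto.
Qed.

Lemma rbar_min_ge (y : R) (a b : Rbar) : Rbar_le y a -> Rbar_le y b -> Rbar_le y (Rbar_min a b).
Proof.
  destruct a, b; simpl; auto. intros. apply Rmin_case; auto.
Qed.


Lemma INR_S_ge1 k : 1 <= INR (S k).
Proof. rewrite S_INR. pose proof (pos_INR k). lra. Qed.

Lemma ex_T p C (kappa mu : nat -> R) n alpha : 0 <= p -> 1 <= C ->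
  (forall i : nat, (1 <= i)%nat ->
     / C * Rpower (INR i) (- p) <= kappa i /\ kappa i <= C * Rpower (INR i) (- p)) ->
  in_l2 mu -> 1 <= INR n -> 0 <= alpha ->
  ex_series (fun k => Tm n alpha (INR (S k)) (kappa (S k)) (mu (S k))) /\
  forall k, 0 <= Tm n alpha (INR (S k)) (kappa (S k)) (mu (S k)).
Proof.
  intros hp hC hk hmu hn ha.
  assert (KB : forall k, 0 < kappa (S k) /\ kappa (S k) ^ 2 <= C ^ 2).
  { intro k. destruct (kappa_bounds p C (INR (S k)) (kappa (S k)) hp hC (INR_S_ge1 k)
        (hk (S k) ltac:(lia))) as [a [_ [_ b]]]. auto. }
  assert (NN : forall k, 0 <= Tm n alpha (INR (S k)) (kappa (S k)) (mu (S k))).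
  { intro k. apply Tm_nonneg; auto. apply INR_S_ge1. apply KB. }
  split; auto.
  apply (@ex_series_le R_AbsRing R_CompleteNormedModule _ (fun k => (INR n)^2 * C^4 * (mu (S k))^2)).
  - intro k. change (norm _) with (Rabs (Tm n alpha (INR (S k)) (kappa (S k)) (mu (S k)))).
    rewrite Rabs_pos_eq by apply NN. apply Tm_le_l2; auto. apply INR_S_ge1. apply KB. apply KB.
  - apply (ex_series_scal_l ((INR n)^2 * C^4)) in hmu. exact hmu.
Qed.


Lemma exp_cube (L : R) : 0 <= L -> (L / 3) ^ 3 <= exp L.
Proof.
  intros hL. replace (exp L) with (exp (L/3) ^ 3).
  - apply pow_incr. split. lra. pose proof (exp_ineq1_le (L/3)). lra.
  - simpl. rewrite Rmult_1_r, <- !exp_plus. f_equal. field.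
Qed.

Lemma iv_core p C x0 k m Lam : 0 <= p -> 1 <= C -> 2 <= x0 ->
  / C * Rpower x0 (- p) <= k /\ k <= C * Rpower x0 (- p) -> m <> 0 -> 0 < Lam ->
  exists M, forall n : nat, 1 <= INR n -> M <= ln (INR n) ->
    let al := (ln (INR n) / ln x0 - 1 - 2 * p) / 2 in
    0 < al /\ al <= ln (INR n) / (2 * ln 2) - 1 / 2 - p /\
    Lam * (ln (INR n)) ^ 2 < Pf p n al * Tm n al x0 k m.
Proof.
  intros hp hC hx0 hk hm hLam.
  destruct (kappa_bounds p C x0 k hp hC ltac:(lra) hk) as [kpos [_ [kup _]]].
  set (l0 := ln x0).
  assert (l0pos : ln 2 <= l0) by (apply ln_le; lra).
  pose proof ln_lt_2 as l2.
  set (E := exp (- 2 * p * l0)).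
  assert (Epos : 0 < E) by apply exp_pos.
  assert (m2 : 0 < m ^ 2) by (apply pow_lt_1_compat || nra).
  set (K := E * m ^ 2 / (x0 * (C ^ 2 + 1) ^ 2)).
  assert (Kpos : 0 < K).
  { unfold K. apply Rdiv_lt_0_compat. nra. apply Rmult_lt_0_compat. lra. 
    apply pow_lt; nra. }
  exists (Rmax ((1 + 2 * p) * l0 + 1) (27 * Lam / K + 1)).
  intros n hn hM. intro al.
  set (L := ln (INR n)). fold L in hM, al.
  assert (hM1 : (1 + 2 * p) * l0 + 1 <= L) by (eapply Rle_trans; [apply Rmax_l| exact hM]).
  assert (hM2 : 27 * Lam / K + 1 <= L) by (eapply Rle_trans; [apply Rmax_r| exact hM]).
  assert (Lpos : 0 < L) by nra.
  assert (nE : INR n = exp L) by (unfold L; rewrite exp_ln; lra).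
  assert (x0E : x0 = exp l0) by (unfold l0; rewrite exp_ln; lra).
  assert (ha : 1 + 2 * al + 2 * p = L / l0) by (unfold al; field; lra).
  split; [|split].
  - unfold al. apply Rmult_lt_0_compat; [|lra].
    assert (1 + 2 * p < L / l0).
    { apply Rmult_lt_reg_r with l0. lra. unfold Rdiv. rewrite Rmult_assoc, Rinv_l; lra. }
    lra.
  - unfold al. assert (L / l0 <= L / ln 2).
    { apply div_le_den; lra. }
    assert (L / (2 * ln 2) = L / ln 2 / 2) by (field; lra). lra.
  -
    assert (hP : Pf p n al = / (l0 * x0)).
    { unfold Pf. rewrite ha. unfold Rpower. fold L.
      replace (1 / (L / l0) * L) with l0 by (field; lra). rewrite <- x0E.
      field. repeat split; lra. }
    set (X := Rpower x0 (1 + 2 * al)).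
    assert (hX : X = INR n * E).
    { unfold X, Rpower. fold l0. rewrite nE. unfold E. rewrite <- exp_plus. f_equal.
      replace (1 + 2 * al) with (L / l0 - 2 * p) by lra. field. lra. }
    assert (hRp : Rpower x0 (2 * p) * E = 1).
    { unfold Rpower, E. fold l0. rewrite <- exp_plus. rewrite <- exp_0. f_equal. ring. }
    assert (hD : X * / k ^ 2 <= C ^ 2 * INR n).
    { apply Rle_trans with (X * (C ^ 2 * Rpower x0 (2 * p))).
      apply Rmult_le_compat_l; auto. rewrite hX. left; apply Rmult_lt_0_compat; lra.
      rewrite hX. replace (INR n * E * (C ^ 2 * Rpower x0 (2 * p))) with
        (C^2 * INR n * (Rpower x0 (2*p) * E)) by ring. rewrite hRp. lra. }
    assert (hD0 : 0 <= X * / k ^ 2).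
    { apply Rmult_le_pos. rewrite hX; nra. left; apply Rinv_0_lt_compat, pow_lt; auto. }
    assert (hT : INR n ^ 2 * X * m ^ 2 * l0 / ((C ^ 2 + 1) * INR n) ^ 2 <= Tm n al x0 k m).
    { unfold Tm. fold X. fold l0. apply div_le_den.
      - rewrite hX. apply Rmult_le_pos; [|lra]. apply Rmult_le_pos; [|nra].
        apply Rmult_le_pos. nra. nra.
      - apply pow_lt. nra.
      - apply pow_incr. split. nra. nra. }
    assert (hprod : INR n * K <= Pf p n al * Tm n al x0 k m).
    { rewrite hP. apply Rle_trans with (/ (l0 * x0) *
          (INR n ^ 2 * X * m ^ 2 * l0 / ((C ^ 2 + 1) * INR n) ^ 2)).
      - right. rewrite hX. unfold K. field. repeat split; nra.
      - apply Rmult_le_compat_l; auto. left. apply Rinv_0_lt_compat. nra. }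
    assert (hc : (L / 3) ^ 3 <= INR n) by (rewrite nE; apply exp_cube; lra).
    assert (hLK : 27 * Lam < L * K).
    { assert (27 * Lam / K < L) by lra.
      apply Rmult_lt_reg_r with (/ K). apply Rinv_0_lt_compat; auto.
      replace (L * K * / K) with L by (field; lra). exact H. }
    apply Rlt_le_trans with (INR n * K); auto.
    apply Rlt_le_trans with ((L/3)^3 * K).
    + replace ((L/3)^3 * K) with (L^2 * (L * K) / 27) by (field).
      assert (0 < L^2) by (apply pow_lt; lra).
      assert (L^2 * (L*K) / 27 - Lam * L^2 = L^2 * (L*K - 27*Lam) / 27) by field.
      assert (0 < L^2 * (L*K - 27*Lam) / 27).
      { apply Rdiv_lt_0_compat; [apply Rmult_lt_0_compat|]; lra. }
      lra.
    + apply Rmult_le_compat_r; lra.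
Qed.


Lemma iii_term p g C c al L a m (n : nat) x k mx :
  0 <= p -> 1 <= C -> 0 < c ->
  / C * Rpower x (- p) <= k /\ k <= C * Rpower x (- p) ->
  mx >= c * Rpower x (- g - 1 / 2) -> 1 <= x -> m / 2 <= x -> x <= m ->
  1 <= INR n -> L = ln (INR n) -> a = 1 + 2 * al + 2 * p -> 0 < a -> m = exp (L / a) ->
  g <= al -> L / (2 * a) <= L / a - ln 2 ->
  c ^ 2 * Rpower (m / 2) (2 * (al - g)) * (L / (2 * a)) / (C ^ 2 + 1) ^ 2 <= Tm n al x k mx.
Proof.
  intros hp hC hc hk hmu hx hm1 hm2 hn hL ha hapos hm hg hLa.
  destruct (kappa_bounds p C x k hp hC hx hk) as [kpos [_ [kup _]]].
  set (X := Rpower x (1 + 2 * al)).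
  assert (Xpos : 0 < X) by (unfold X, Rpower; apply exp_pos).
  assert (nE : INR n = exp L) by (rewrite hL, exp_ln; lra).
  assert (mpos : 0 < m) by (rewrite hm; apply exp_pos).
  assert (hD : X * / k ^ 2 <= C ^ 2 * INR n).
  { apply Rle_trans with (X * (C ^ 2 * Rpower x (2 * p))).
    apply Rmult_le_compat_l; lra.
    replace (X * (C ^ 2 * Rpower x (2 * p))) with (C ^ 2 * Rpower x a).
    2:{ unfold X. rewrite ha, Rpower_plus. ring. }
    apply Rmult_le_compat_l. nra.
    apply Rle_trans with (Rpower m a). apply Rle_Rpower_l; lra.
    rewrite nE. unfold Rpower. rewrite hm, ln_exp. right. f_equal. field. lra. }
  assert (hD0 : 0 <= X * / k ^ 2).
  { apply Rmult_le_pos. lra. left; apply Rinv_0_lt_compat, pow_lt; auto. }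
  assert (lnx0 : 0 <= ln x) by (apply ln_nonneg; lra).
  assert (hT : INR n ^ 2 * X * mx ^ 2 * ln x / ((C ^ 2 + 1) * INR n) ^ 2 <= Tm n al x k mx).
  { unfold Tm. fold X. apply div_le_den.
    - apply Rmult_le_pos; [|lra]. apply Rmult_le_pos; [|apply pow2_ge_0].
      apply Rmult_le_pos. apply pow_le; lra. lra.
    - apply pow_lt. nra.
    - apply pow_incr. split. nra. nra. }
  eapply Rle_trans; [|exact hT].
  replace (INR n ^ 2 * X * mx ^ 2 * ln x / ((C ^ 2 + 1) * INR n) ^ 2) with
     (X * mx ^ 2 * ln x / (C ^ 2 + 1) ^ 2) by (field; split; nra).
  unfold Rdiv. apply Rmult_le_compat_r. left; apply Rinv_0_lt_compat, pow_lt; nra.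
  remember (Rpower x (- g - 1 / 2)) as r eqn:Er.
  assert (rpos : 0 < r) by (rewrite Er; unfold Rpower; apply exp_pos).
  assert (hmx2 : (c * r) ^ 2 <= mx ^ 2) by (apply pow_incr; split; nra).
  assert (hXr : X * (c * r) ^ 2 = c ^ 2 * Rpower x (2 * (al - g))).
  { unfold X. rewrite Er. unfold Rpower.
    replace (exp ((1 + 2 * al) * ln x) * (c * exp ((- g - 1 / 2) * ln x)) ^ 2)
      with (c ^ 2 * (exp ((1 + 2 * al) * ln x) * exp ((- g - 1 / 2) * ln x) * exp ((- g - 1 / 2) * ln x))) by ring.
    rewrite <- !exp_plus.
    assert (Eexp : (1 + 2 * al) * ln x + (- g - 1 / 2) * ln x + (- g - 1 / 2) * ln x = 2 * (al - g) * ln x) by field.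
    rewrite Eexp. reflexivity. }
  assert (h1 : c ^ 2 * Rpower (m / 2) (2 * (al - g)) <= X * mx ^ 2).
  {
    apply Rle_trans with (X * (c * r) ^ 2); [| apply Rmult_le_compat_l; lra].
    rewrite hXr. apply Rmult_le_compat_l. nra. apply Rle_Rpower_l; lra. }
  assert (lnm2 : ln (m / 2) = L / a - ln 2).
  { rewrite hm. change (exp (L / a) / 2) with (exp (L / a) * / 2).
    rewrite ln_mult; [| apply exp_pos | lra]. rewrite ln_exp, ln_Rinv by lra. ring. }
  assert (h2 : L / (2 * a) <= ln x).
  { eapply Rle_trans; [exact hLa|]. rewrite <- lnm2. apply ln_le; lra. }
  assert (0 <= c ^ 2 * Rpower (m / 2) (2 * (al - g))).
  { apply Rmult_le_pos. nra. unfold Rpower; left; apply exp_pos. }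
  assert (0 <= L / (2 * a)).
  { assert (0 <= L) by (rewrite hL; apply ln_nonneg; lra).
    unfold Rdiv. apply Rmult_le_pos; auto. left; apply Rinv_0_lt_compat; lra. }
  apply Rmult_le_compat; auto.
Qed.


Lemma ln_le_2sqrt (L : R) : 0 < L -> ln L <= 2 * sqrt L.
Proof.
  intros hL. assert (s0 : 0 < sqrt L) by (apply sqrt_lt_R0; lra).
  rewrite <- (sqrt_sqrt L) at 1 by lra. rewrite ln_mult by lra.
  pose proof (ln_le_lin (sqrt L) s0). lra.
Qed.

Lemma exp_sq (x : R) : 0 <= x -> (1 + x / 2) ^ 2 <= exp x.
Proof.
  intros hx. replace (exp x) with (exp (x / 2) ^ 2).
  - apply pow_incr. split. lra. apply exp_ineq1_le.
  - simpl. rewrite Rmult_1_r, <- exp_plus. f_equal. field.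
Qed.

Lemma up_nat (y : R) : 0 <= y -> exists j : nat, y < INR j /\ INR j <= y + 1.
Proof.
  intros hy. destruct (archimed y) as [h1 h2].
  exists (Z.to_nat (up y)). rewrite INR_IZR_INZ, Z2Nat.id. lra.
  apply le_IZR. lra.
Qed.

Lemma iii_core p C (kappa mu : nat -> R) c g Lam : 0 <= p -> 1 <= C ->
  (forall i : nat, (1 <= i)%nat ->
     / C * Rpower (INR i) (- p) <= kappa i /\ kappa i <= C * Rpower (INR i) (- p)) ->
  0 < c -> 0 < g -> 0 < Lam -> in_l2 mu ->
  (forall i : nat, (1 <= i)%nat -> mu i >= c * Rpower (INR i) (- g - 1 / 2)) ->
  exists M, forall n : nat, 1 <= INR n -> M <= ln (INR n) ->
    let al := g + 3 * (2 + 2 * g + 2 * p) * ln (ln (INR n)) / ln (INR n) in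
    0 < al /\ Lam * (ln (INR n)) ^ 2 < h_fun p kappa mu n al.
Proof.
  intros hp hC hk hc hg hLam hmu hmuc.
  remember (2 + 2 * g + 2 * p) as B eqn:EB.
  remember (3 * B) as C0 eqn:EC0.
  assert (Bpos : 2 <= B) by lra.
  remember (8 * (C ^ 2 + 1) ^ 2 * Lam / c ^ 2) as Q eqn:EQ.
  exists (Rmax (Rmax 1 (16 * C0 ^ 2)) (Rmax (6 * B) (Q + 1))).
  intros n hn hM al.
  remember (ln (INR n)) as L eqn:EL.
  assert (hM1 : 1 <= L) by (eapply Rle_trans; [|exact hM]; eapply Rle_trans; [apply Rmax_l|apply Rmax_l]).
  assert (hM2 : 16 * C0 ^ 2 <= L) by (eapply Rle_trans; [|exact hM]; eapply Rle_trans; [apply Rmax_r|apply Rmax_l]).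
  assert (hM3 : 6 * B <= L) by (eapply Rle_trans; [|exact hM]; eapply Rle_trans; [apply Rmax_l|apply Rmax_r]).
  assert (hM4 : Q + 1 <= L) by (eapply Rle_trans; [|exact hM]; eapply Rle_trans; [apply Rmax_r|apply Rmax_r]).
  remember (ln L) as lL eqn:ElL.
  assert (lL0 : 0 <= lL) by (rewrite ElL; apply ln_nonneg; lra).
  assert (sq : 4 * C0 <= sqrt L).
  { destruct (Rle_lt_dec (4 * C0) (sqrt L)) as [h|h]; auto.
    pose proof (sqrt_sqrt L ltac:(lra)). pose proof (sqrt_pos L). nra. }
  assert (hlL : 2 * C0 * lL <= L).
  { pose proof (ln_le_2sqrt L ltac:(lra)). rewrite <- ElL in H.
    pose proof (sqrt_sqrt L ltac:(lra)). pose proof (sqrt_pos L). nra. }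
  remember (C0 * lL / L) as eps eqn:Eeps.
  assert (eps0 : 0 <= eps) by (rewrite Eeps; apply Rmult_le_pos; [nra| left; apply Rinv_0_lt_compat; lra]).
  assert (eps1 : 2 * eps <= 1 / 1 * (L / L)).
  { rewrite Eeps. apply Rmult_le_reg_r with L. lra. field_simplify; try lra. }
  replace (1 / 1 * (L / L)) with 1 in eps1 by (field; lra).
  assert (hal : al = g + eps) by (unfold al; try rewrite <- EL; try rewrite <- ElL; rewrite Eeps; field; lra).
  assert (alpos : 0 < al) by lra.
  split; auto.
  remember (1 + 2 * al + 2 * p) as a eqn:Ea.
  assert (aB : a <= B) by lra.
  assert (a1 : 1 <= a) by lra.
  remember (exp (L / a)) as m eqn:Em.
  assert (LaB : L / B <= L / a) by (apply div_le_den; lra).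
  assert (LB6 : 6 <= L / B).
  { apply Rmult_le_reg_r with B. lra. unfold Rdiv. rewrite Rmult_assoc, Rinv_l; lra. }
  assert (m16 : 16 <= m).
  { rewrite Em. pose proof (exp_sq (L / a) ltac:(lra)). nra. }
  pose proof ln_lt_2 as l2. assert (l2' : ln 2 < 1).
  { rewrite <- ln_exp with 1. apply ln_increasing. lra. pose proof (exp_ineq1_le 1). 
    assert (exp 1 <> 2). { intro E. pose proof (exp_ineq1 1 ltac:(lra)). lra. }
    pose proof (exp_ineq1 1 ltac:(lra)). lra. }
  assert (hLa : L / (2 * a) <= L / a - ln 2).
  { assert (L / (2 * a) = L / a / 2) by (field; lra). lra. }
  destruct (up_nat (m / 2) ltac:(lra)) as [j [hj1 hj2]].
  assert (j3 : (3 <= j)%nat).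
  { apply INR_le. simpl. lra. }
  remember (j - 3)%nat as J eqn:EJ.
  assert (hJ : INR J = INR j - 3) by (rewrite EJ, minus_INR by lia; simpl; lra).
  remember (c ^ 2 * Rpower (m / 2) (2 * (al - g)) * (L / (2 * a)) / (C ^ 2 + 1) ^ 2) as b eqn:Eb.
  destruct (ex_T p C kappa mu n al hp hC hk hmu hn ltac:(lra)) as [hex hnn].
  assert (hblock : INR J * b <= sum_f_R0 (fun k => Tm n al (INR (S k)) (kappa (S k)) (mu (S k))) (j + J)).
  { apply block_sum; auto. intros k hkr. rewrite Eb.
    assert (hk1 : INR j + 1 <= INR k) by (rewrite <- S_INR; apply le_INR; lia).
    assert (hk2 : INR k <= INR j + INR J) by (rewrite <- plus_INR; apply le_INR; lia).
    rewrite S_INR.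
    apply (iii_term p g C c al L a m n (INR k + 1) (kappa (S k)) (mu (S k))); auto.
    all: first [ rewrite <- S_INR; first [apply hk | apply hmuc]; lia
               | pose proof (pos_INR k); lra | lra ]. }
  assert (hser : INR J * b <= Series (fun k => Tm n al (INR (S k)) (kappa (S k)) (mu (S k)))).
  { eapply Rle_trans; [exact hblock|]. apply series_ge_partial; auto. }
  rewrite h_fun_eq.
  assert (hPf : Pf p n al = a / (m * L)).
  { unfold Pf. rewrite <- Ea, <- EL. unfold Rpower. rewrite <- EL, Em. f_equal. f_equal. f_equal. field. lra. }
  assert (Pfpos : 0 < Pf p n al).
  { rewrite hPf. apply Rdiv_lt_0_compat. lra. apply Rmult_lt_0_compat; lra. }
  assert (hRP : L ^ 3 <= Rpower (m / 2) (2 * (al - g))).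
  { unfold Rpower.
    assert (lnm2 : ln (m / 2) = L / a - ln 2).
    { rewrite Em. change (exp (L / a) / 2) with (exp (L / a) * / 2).
      rewrite ln_mult; [| apply exp_pos | lra]. rewrite ln_exp, ln_Rinv by lra. ring. }
    rewrite lnm2.
    replace (L ^ 3) with (exp (3 * lL)).
    2:{ rewrite ElL. replace 3 with (INR 3) by (simpl; ring).
        change (exp (INR 3 * ln L)) with (Rpower L (INR 3)). apply Rpower_pow. lra. }
    apply exp_mono.
    apply Rle_trans with (2 * eps * (L / (2 * a))).
    - rewrite Eeps. replace (2 * (C0 * lL / L) * (L / (2 * a))) with (C0 / a * lL) by (field; lra).
      apply Rmult_le_compat_r; auto.
      apply Rmult_le_reg_r with a. lra. unfold Rdiv. rewrite Rmult_assoc, Rinv_l by lra. nra.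
    - replace (2 * (al - g)) with (2 * eps) by lra. apply Rmult_le_compat_l; lra. }
  assert (hJm : m / 4 <= INR J) by lra.
  assert (b0 : 0 <= b).
  { rewrite Eb. apply Rmult_le_pos. apply Rmult_le_pos. apply Rmult_le_pos. nra.
    unfold Rpower; left; apply exp_pos. apply Rmult_le_pos; [lra| left; apply Rinv_0_lt_compat; lra].
    left; apply Rinv_0_lt_compat, pow_lt; nra. }
  apply Rlt_le_trans with (Pf p n al * (INR J * b)).
  2: apply Rmult_le_compat_l; lra.
  apply Rlt_le_trans with (Pf p n al * (m / 4 * b)).
  2: apply Rmult_le_compat_l; [lra|]; apply Rmult_le_compat_r; lra.
  rewrite hPf, Eb.
  replace (a / (m * L) * (m / 4 * (c ^ 2 * Rpower (m / 2) (2 * (al - g)) * (L / (2 * a)) / (C ^ 2 + 1) ^ 2)))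
    with (c ^ 2 / (8 * (C ^ 2 + 1) ^ 2) * Rpower (m / 2) (2 * (al - g))) by (field; repeat split; nra).
  assert (kpos : 0 < c ^ 2 / (8 * (C ^ 2 + 1) ^ 2)).
  { apply Rdiv_lt_0_compat. nra. apply Rmult_lt_0_compat. lra. apply pow_lt; nra. }
  apply Rlt_le_trans with (c ^ 2 / (8 * (C ^ 2 + 1) ^ 2) * L ^ 3).
  2: apply Rmult_le_compat_l; lra.
  assert (hQ : Q < L) by lra.
  rewrite EQ in hQ.
  assert (Lam * 8 * (C ^ 2 + 1) ^ 2 < L * c ^ 2).
  { apply Rmult_lt_reg_r with (/ c ^ 2). apply Rinv_0_lt_compat; nra.
    replace (L * c ^ 2 * / c ^ 2) with L by (field; lra).
    replace (Lam * 8 * (C ^ 2 + 1) ^ 2 * / c ^ 2) with (8 * (C ^ 2 + 1) ^ 2 * Lam / c ^ 2) by (field; lra).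
    exact hQ. }
  replace (c ^ 2 / (8 * (C ^ 2 + 1) ^ 2) * L ^ 3) with (L ^ 2 * (L * c ^ 2) / (8 * (C ^ 2 + 1) ^ 2))
    by (field; nra).
  apply Rmult_lt_reg_r with (8 * (C ^ 2 + 1) ^ 2). apply Rmult_lt_0_compat. lra. apply pow_lt; nra.
  replace (L ^ 2 * (L * c ^ 2) / (8 * (C ^ 2 + 1) ^ 2) * (8 * (C ^ 2 + 1) ^ 2)) with (L ^ 2 * (L * c ^ 2))
    by (field; nra).
  assert (0 < L ^ 2) by (apply pow_lt; lra). nra.
Qed.


Lemma mix_le (D y th : R) : 0 < D -> 0 < y -> 0 <= th <= 1 ->
  exp (th * ln D + (1 - th) * ln y) <= D + y.
Proof.
  intros hD hy hth. destruct (Rle_dec (ln D) (ln y)) as [h|h].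
  - apply Rle_trans with (exp (ln y)). apply exp_mono. nra. rewrite exp_ln; lra.
  - apply Rle_trans with (exp (ln D)). apply exp_mono. nra. rewrite exp_ln; lra.
Qed.

Lemma lx_bound (x d : R) : 1 <= x -> 0 < d -> ln x <= exp (d * ln x) / d.
Proof.
  intros hx hd. pose proof (exp_ge_id (d * ln x)).
  apply Rmult_le_reg_r with d; auto. unfold Rdiv. rewrite Rmult_assoc, Rinv_l; lra.
Qed.

Lemma exp4 u v w z : exp u * exp v * exp w / exp z = exp (u + v + w - z).
Proof.
  unfold Rminus. rewrite !exp_plus, exp_Ropp. field. apply Rgt_not_eq, exp_pos.
Qed.

Lemma Pf_eq p n al L a : L = ln (INR n) -> 0 < L -> a = 1 + 2 * al + 2 * p -> 0 < a ->
  Pf p n al = a * exp (- L / a) / L.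
Proof.
  intros hL hL0 ha ha0. unfold Pf, Rpower. rewrite <- ha, <- hL.
  replace (- L / a) with (- (1 / a * L)) by (field; lra). rewrite exp_Ropp.
  field. split; [apply Rgt_not_eq, exp_pos | lra].
Qed.

Lemma C4 (C : R) : 1 <= C -> exp (4 * ln C) = C ^ 4.
Proof.
  intros hC. replace 4 with (INR 4) by (simpl; ring).
  change (exp (INR 4 * ln C)) with (Rpower C (INR 4)). apply Rpower_pow. lra.
Qed.

Lemma i_term p be C c0 al L a B (n : nat) x k mx :
  0 <= p -> 1 <= C -> / C * Rpower x (- p) <= k /\ k <= C * Rpower x (- p) ->
  1 <= x -> 1 <= INR n -> L = ln (INR n) -> 1 <= L -> 2 * c0 <= L -> 1 <= c0 ->
  0 < al -> c0 <= (be - al) * L -> a = 1 + 2 * al + 2 * p -> B = 1 + 2 * be + 2 * p ->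
  Pf p n al * Tm n al x k mx <= B * C ^ 4 * exp ((1 - 2 * c0) / B) * (Rpower x (2 * be) * mx ^ 2).
Proof.
  intros hp hC hk hx hn hL hL1 hc0L hc0 hal hab ha hB.
  destruct (kappa_bounds p C x k hp hC hx hk) as [kpos [klo _]].
  assert (alb : al < be) by nra.
  assert (a1 : 1 <= a) by lra. assert (aB : a <= B) by lra.
  remember (ln x) as lx eqn:Elx.
  assert (lx0 : 0 <= lx) by (rewrite Elx; apply ln_nonneg; lra).
  assert (nE : INR n = exp L) by (rewrite hL, exp_ln; lra).
  assert (xE : x = exp lx) by (rewrite Elx, exp_ln; lra).
  assert (lnC : 0 <= ln C) by (apply ln_nonneg; lra).
  rewrite (Pf_eq p n al L a hL ltac:(lra) ha ltac:(lra)).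
  remember (Rpower x (1 + 2 * al)) as X eqn:EX.
  assert (Xe : X = exp ((1 + 2 * al) * lx)) by (rewrite EX; unfold Rpower; rewrite Elx; reflexivity).
  assert (ve : Rpower x (2 * be) = exp (2 * be * lx)) by (unfold Rpower; rewrite Elx; reflexivity).
  rewrite ve.
  remember (X * / k ^ 2) as D eqn:ED.
  assert (Dlo : exp (a * lx) / C ^ 2 <= D).
  { rewrite ED. apply Rle_trans with (X * (Rpower x (2 * p) / C ^ 2)).
    - rewrite Xe. unfold Rpower. rewrite <- Elx. unfold Rdiv. rewrite <- Rmult_assoc, <- exp_plus.
      right. f_equal. f_equal. rewrite ha. ring.
    - apply Rmult_le_compat_l; [rewrite Xe; left; apply exp_pos | exact klo]. }
  assert (C2 : 0 < C ^ 2) by (apply pow_lt; lra).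
  assert (Dpos : 0 < D).
  { eapply Rlt_le_trans; [|exact Dlo]. apply Rdiv_lt_0_compat; auto. apply exp_pos. }
  assert (hK : 1 <= C ^ 4). { assert (1 <= C ^ 2) by nra. replace (C ^ 4) with (C ^ 2 * C ^ 2) by ring. nra. }
  remember (1 + 2 * al - 2 * be + 1 / L) as e1 eqn:Ee1.
  assert (mx0 : 0 <= mx ^ 2) by apply pow2_ge_0.
  assert (keyexp : (- L + e1 * L) / a <= (1 - 2 * c0) / B).
  { replace ((- L + e1 * L)) with (2 * (al - be) * L + 1) by (rewrite Ee1; field; lra).
    apply Rle_trans with ((1 - 2 * c0) / a).
    - unfold Rdiv. apply Rmult_le_compat_r. left; apply Rinv_0_lt_compat; lra. nra.
    - unfold Rdiv. apply Rmult_le_compat_neg_l; [lra | apply Rinv_le_contravar; lra]. }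
  assert (LP : 0 < L) by lra.
  destruct (Rlt_le_dec e1 0) as [he|he].
  -
    assert (hT : Tm n al x k mx <= X * mx ^ 2 * lx).
    { unfold Tm. rewrite <- EX, <- ED, <- Elx.
      apply Rle_trans with (INR n ^ 2 * X * mx ^ 2 * lx / INR n ^ 2).
      - apply div_le_den. rewrite Xe. apply Rmult_le_pos; auto. apply Rmult_le_pos; auto.
        apply Rmult_le_pos. apply pow_le; lra. left; apply exp_pos.
        apply pow_lt; lra. apply pow_incr; lra.
      - right. field. lra. }
    assert (hX : X * lx <= L * exp (2 * be * lx)).
    { apply Rle_trans with (X * (exp (1 / L * lx) / (1 / L))).
      apply Rmult_le_compat_l. rewrite Xe; left; apply exp_pos.
      rewrite Elx. apply lx_bound; auto. apply Rdiv_lt_0_compat; lra.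
      replace (X * (exp (1 / L * lx) / (1 / L))) with (L * (X * exp (1 / L * lx))) by (field; lra).
      apply Rmult_le_compat_l. lra. rewrite Xe, <- exp_plus. apply exp_mono.
      assert ((1 + 2 * al) + 1 / L <= 2 * be) by lra. nra. }
    assert (hPL : a * exp (- L / a) <= B * C ^ 4 * exp ((1 - 2 * c0) / B)).
    { apply Rle_trans with (B * exp (- L / a)).
      apply Rmult_le_compat_r. left; apply exp_pos. lra.
      rewrite Rmult_assoc. apply Rmult_le_compat_l. lra.
      rewrite <- (Rmult_1_l (exp (- L / a))). apply Rmult_le_compat. lra. left; apply exp_pos. auto.
      apply exp_mono. apply Rle_trans with (- 2 * c0 / a).
      unfold Rdiv. apply Rmult_le_compat_r. left; apply Rinv_0_lt_compat; lra. lra.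
      apply Rle_trans with (- 2 * c0 / B).
      unfold Rdiv. apply Rmult_le_compat_neg_l; [lra | apply Rinv_le_contravar; lra].
      unfold Rdiv. apply Rmult_le_compat_r. left; apply Rinv_0_lt_compat; lra. lra. }
    apply Rle_trans with (a * exp (- L / a) / L * (X * mx ^ 2 * lx)).
    { apply Rmult_le_compat_l; auto. apply Rdiv_le_0_compat; [|lra].
      apply Rmult_le_pos; [lra|left; apply exp_pos]. }
    replace (a * exp (- L / a) / L * (X * mx ^ 2 * lx)) with
      (a * exp (- L / a) * (X * lx / L) * mx ^ 2) by (field; lra).
    replace (B * C ^ 4 * exp ((1 - 2 * c0) / B) * (exp (2 * be * lx) * mx ^ 2)) with
      (B * C ^ 4 * exp ((1 - 2 * c0) / B) * exp (2 * be * lx) * mx ^ 2) by ring.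
    apply Rmult_le_compat_r; auto.
    apply Rmult_le_compat. apply Rmult_le_pos. lra. left; apply exp_pos.
    apply Rdiv_le_0_compat; [rewrite Xe; apply Rmult_le_pos; [left; apply exp_pos|lra]|lra].
    auto.
    apply Rmult_le_reg_r with L; auto. unfold Rdiv. rewrite Rmult_assoc, Rinv_l; lra.
  -
    remember (e1 / (2 * a)) as th eqn:Eth.
    assert (th0 : 0 <= th) by (rewrite Eth; apply Rdiv_le_0_compat; lra).
    assert (th1 : th <= 1).
    { rewrite Eth. apply Rmult_le_reg_r with (2 * a). lra. unfold Rdiv. rewrite Rmult_assoc, Rinv_l by lra.
      assert (1 / L <= 1) by (apply Rmult_le_reg_r with L; [lra|]; unfold Rdiv; rewrite Rmult_assoc, Rinv_l; lra).
      lra. }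
    assert (lnD : a * lx - 2 * ln C <= ln D).
    { apply Rle_trans with (ln (exp (a * lx) / C ^ 2)).
      right. unfold Rdiv. rewrite ln_mult, ln_exp, ln_Rinv; auto. 2: apply exp_pos. 
      2: apply Rinv_0_lt_compat; auto.
      replace (C ^ 2) with (C * C) by ring. rewrite ln_mult by lra. ring.
      apply ln_le; auto. apply Rdiv_lt_0_compat; auto. apply exp_pos. }
    remember (e1 * lx - 4 * th * ln C + (2 - 2 * th) * L) as W eqn:EW.
    assert (hden : exp W <= (D + INR n) ^ 2).
    { apply Rle_trans with (exp (th * ln D + (1 - th) * ln (INR n)) ^ 2).
      - replace (exp (th * ln D + (1 - th) * ln (INR n)) ^ 2) with
          (exp (2 * (th * ln D + (1 - th) * ln (INR n)))).
        2:{ simpl. rewrite Rmult_1_r, <- exp_plus. f_equal. ring. }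
        apply exp_mono. rewrite EW, <- hL.
        replace (e1 * lx) with (2 * th * (a * lx)) by (rewrite Eth; field; lra). nra.
      - apply pow_incr. split. left; apply exp_pos. apply mix_le; auto. lra. }
    assert (hT : Tm n al x k mx <= exp (2 * L) * X * mx ^ 2 * lx / exp W).
    { unfold Tm. rewrite <- EX, <- ED, <- Elx.
      eapply Rle_trans. apply div_le_den. rewrite Xe. apply Rmult_le_pos; auto. apply Rmult_le_pos; auto.
      apply Rmult_le_pos. apply pow_le; lra. left; apply exp_pos. apply exp_pos. exact hden.
      right. rewrite nE. replace (exp L ^ 2) with (exp (2 * L)). reflexivity.
      simpl. rewrite Rmult_1_r, <- exp_plus. f_equal. ring. }
    apply Rle_trans with (a * exp (- L / a) / L * (exp (2 * L) * X * mx ^ 2 * lx / exp W)).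
    { apply Rmult_le_compat_l; auto. apply Rdiv_le_0_compat; [|lra].
      apply Rmult_le_pos; [lra|left; apply exp_pos]. }
    replace (a * exp (- L / a) / L * (exp (2 * L) * X * mx ^ 2 * lx / exp W)) with
      (a * (exp (- L / a) * exp (2 * L) * X / exp W) * (lx / L) * mx ^ 2) by (field; split; [apply Rgt_not_eq, exp_pos|lra]).
    rewrite Xe, exp4.
    replace (B * C ^ 4 * exp ((1 - 2 * c0) / B) * (exp (2 * be * lx) * mx ^ 2)) with
      (B * (exp ((1 - 2 * c0) / B) * exp (4 * ln C) * exp (2 * be * lx)) * mx ^ 2) by (rewrite C4; auto; ring).
    rewrite <- !exp_plus.
    apply Rmult_le_compat_r; auto.
    assert (hlx : lx / L <= exp (1 / L * lx)).
    { eapply Rle_trans. apply Rmult_le_compat_r. left; apply Rinv_0_lt_compat; lra.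
      rewrite Elx. apply (lx_bound x (1 / L)); auto. apply Rdiv_lt_0_compat; lra.
      rewrite <- Elx. right. field. lra. }
    rewrite Rmult_assoc. apply Rmult_le_compat; try lra.
    apply Rmult_le_pos. left; apply exp_pos. apply Rdiv_le_0_compat; lra.
    eapply Rle_trans. apply Rmult_le_compat_l. left; apply exp_pos. exact hlx.
    rewrite <- exp_plus. apply exp_mono.
    rewrite EW.
    assert (E2 : - L / a + 2 * L + (1 + 2 * al) * lx - (e1 * lx - 4 * th * ln C + (2 - 2 * th) * L) + 1 / L * lx
               = (- L + e1 * L) / a + 4 * th * ln C + 2 * be * lx).
    { rewrite Eth. rewrite Ee1. field. split; lra. }
    rewrite E2.
    assert (4 * th * ln C <= 4 * ln C) by nra. lra.
Qed.


Lemma h_le p (kappa mu : nat -> R) n al (v : nat -> R) K S0 :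
  0 < Pf p n al ->
  (forall k, 0 <= Tm n al (INR (S k)) (kappa (S k)) (mu (S k))) ->
  (forall k, Pf p n al * Tm n al (INR (S k)) (kappa (S k)) (mu (S k)) <= K * v k) ->
  ex_series v -> Series v <= S0 -> 0 <= K ->
  h_fun p kappa mu n al <= K * S0.
Proof.
  intros hP hT hB hv hS hK. rewrite h_fun_eq.
  assert (Series (fun k => Tm n al (INR (S k)) (kappa (S k)) (mu (S k))) <=
          Series (fun k => (K / Pf p n al) * v k)).
  { apply Series_le.
    - intro k. split; auto. apply Rmult_le_reg_l with (Pf p n al); auto.
      replace (Pf p n al * (K / Pf p n al * v k)) with (K * v k) by (field; lra). auto.
    - apply (@ex_series_scal_l R_AbsRing R_NormedModule (K / Pf p n al)) in hv. exact hv. }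
  rewrite Series_scal_l in H.
  assert (Series v * K <= S0 * K) by (apply Rmult_le_compat_r; auto).
  apply Rle_trans with (Pf p n al * (K / Pf p n al * Series v)).
  apply Rmult_le_compat_l; lra.
  replace (Pf p n al * (K / Pf p n al * Series v)) with (Series v * K) by (field; lra). lra.
Qed.

Lemma ball_sq (v : nat -> R) Rad : (forall k, 0 <= v k) -> ex_series v -> sqrt (Series v) <= Rad ->
  Series v <= Rad ^ 2.
Proof.
  intros h0 hv hs. pose proof (series_nonneg v h0 hv).
  rewrite <- (sqrt_sqrt (Series v)) by auto. pose proof (sqrt_pos (Series v)). nra.
Qed.

Lemma Pf_pos p n al : 1 < INR n -> 0 <= p -> 0 < al -> 0 < Pf p n al.
Proof.
  intros hn hp hal. unfold Pf. apply Rdiv_lt_0_compat. lra.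
  apply Rmult_lt_0_compat. unfold Rpower; apply exp_pos.
  rewrite <- ln_1. apply ln_increasing; lra.
Qed.

Lemma i_core p C (kappa : nat -> R) : 0 <= p -> 1 <= C ->
  (forall i : nat, (1 <= i)%nat ->
     / C * Rpower (INR i) (- p) <= kappa i /\ kappa i <= C * Rpower (INR i) (- p)) ->
  forall l be Rad : R, 0 < l -> 0 < be -> 0 < Rad ->
   exists c0 : R, 0 < c0 /\ exists N : nat, forall n : nat, (N <= n)%nat ->
     forall mu : nat -> R, in_l2 mu -> sobolev_ball be Rad mu ->
       Rbar_le (Finite (be - c0 / ln (INR n))) (alpha_lower p kappa mu l n).
Proof.
  intros hp hC hk l be Rad hl hbe hRad.
  remember (1 + 2 * be + 2 * p) as B eqn:EB.
  assert (hC4 : 1 <= C ^ 4). { assert (1 <= C ^ 2) by nra. replace (C ^ 4) with (C ^ 2 * C ^ 2) by ring. nra. }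
  remember (B * C ^ 4 * Rad ^ 2) as K0 eqn:EK0.
  assert (K0pos : 0 < K0).
  { rewrite EK0. apply Rmult_lt_0_compat. apply Rmult_lt_0_compat; lra. apply pow_lt; lra. }
  remember (ln (l / K0)) as xl eqn:Exl.
  remember (1 + (1 + B * Rabs xl) / 2) as c0 eqn:Ec0.
  assert (Bpos : 1 <= B) by lra.
  assert (hBx : 0 <= B * Rabs xl) by (apply Rmult_le_pos; [lra | apply Rabs_pos]).
  exists c0. split. lra.
  destruct (big_ln (Rmax (Rmax 2 (2 * c0)) (be ^ 2))) as [N HN].
  exists N. intros n hnN mu hmu [hvex hvs].
  destruct (HN n hnN) as [hM hn].
  remember (ln (INR n)) as L eqn:EL.
  assert (L2 : 2 <= L) by (eapply Rle_trans; [|exact hM]; eapply Rle_trans; [apply Rmax_l|apply Rmax_l]).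
  assert (Lc : 2 * c0 <= L) by (eapply Rle_trans; [|exact hM]; eapply Rle_trans; [apply Rmax_r|apply Rmax_l]).
  assert (Lb : be ^ 2 <= L) by (eapply Rle_trans; [|exact hM]; apply Rmax_r).
  assert (n1 : 1 < INR n).
  { destruct hn as [h|h]; auto. rewrite <- h, ln_1 in EL. lra. }
  unfold alpha_lower. rewrite <- EL.
  assert (hc0L : 0 <= c0 / L) by (apply Rdiv_le_0_compat; lra).
  apply rbar_min_ge.
  - apply glb_ge. intros al [hal hh].
    destruct (Rle_lt_dec (be - c0 / L) al) as [h|h]; auto. exfalso.
    assert (hab : c0 <= (be - al) * L).
    { apply Rmult_le_reg_r with (/ L). apply Rinv_0_lt_compat; lra.
      replace ((be - al) * L * / L) with (be - al) by (field; lra).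
      unfold Rdiv in h. lra. }
    destruct (ex_T p C kappa mu n al hp hC hk hmu ltac:(lra) ltac:(lra)) as [hex hnn].
    assert (h_fun p kappa mu n al <= (B * C ^ 4 * exp ((1 - 2 * c0) / B)) * Rad ^ 2).
    { apply (h_le p kappa mu n al (fun k => Rpower (INR (S k)) (2 * be) * (mu (S k)) ^ 2)); auto.
      - apply Pf_pos; auto.
      - intro k. apply (i_term p be C c0 al L (1 + 2 * al + 2 * p) B n); auto.
        apply hk; lia. apply INR_S_ge1. lra. lra.
      - apply ball_sq; auto. intro k. apply Rmult_le_pos. unfold Rpower; left; apply exp_pos.
        apply pow2_ge_0.
      - apply Rmult_le_pos. apply Rmult_le_pos; lra. left; apply exp_pos. }
    assert (hexp : exp ((1 - 2 * c0) / B) <= l / K0).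
    { rewrite <- (exp_ln (l / K0)) by (apply Rdiv_lt_0_compat; lra).
      apply exp_mono. rewrite <- Exl.
      assert ((1 - 2 * c0) / B = - Rabs xl - 2 / B) by (rewrite Ec0; field; lra).
      assert (0 <= 2 / B) by (apply Rdiv_le_0_compat; lra).
      pose proof (Rle_abs (- xl)). rewrite Rabs_Ropp in H2. lra. }
    assert (B * C ^ 4 * exp ((1 - 2 * c0) / B) * Rad ^ 2 <= l).
    { replace (B * C ^ 4 * exp ((1 - 2 * c0) / B) * Rad ^ 2) with (K0 * exp ((1 - 2 * c0) / B))
        by (rewrite EK0; ring).
      apply Rle_trans with (K0 * (l / K0)). apply Rmult_le_compat_l; lra.
      right. field. lra. }
    lra.
  - simpl. assert (be <= sqrt L).
    { destruct (Rle_lt_dec be (sqrt L)) as [h|h]; auto.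
      pose proof (sqrt_sqrt L ltac:(lra)). pose proof (sqrt_pos L). nra. }
    lra.
Qed.


Lemma ii_term n al g x k mx : 1 <= INR n -> 1 <= x -> 0 < k -> 0 <= al -> 0 < g ->
  Tm n al x k mx <= exp ((2 + 2 * al) * ln ((2 + 2 * al) / (2 * g))) * (exp (2 * g * x) * mx ^ 2).
Proof.
  intros hn hx hk hal hg.
  remember (ln x) as lx eqn:Elx.
  assert (lx0 : 0 <= lx) by (rewrite Elx; apply ln_nonneg; lra).
  assert (lxx : lx <= x) by (pose proof (ln_le_lin x ltac:(lra)); lra).
  remember (Rpower x (1 + 2 * al)) as X eqn:EX.
  assert (Xe : X = exp ((1 + 2 * al) * lx)) by (rewrite EX; unfold Rpower; rewrite Elx; reflexivity).
  assert (D0 : 0 <= X * / k ^ 2).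
  { apply Rmult_le_pos. rewrite Xe; left; apply exp_pos. left; apply Rinv_0_lt_compat, pow_lt; auto. }
  assert (hT : Tm n al x k mx <= X * mx ^ 2 * lx).
  { unfold Tm. rewrite <- EX, <- Elx.
    apply Rle_trans with (INR n ^ 2 * X * mx ^ 2 * lx / INR n ^ 2).
    - apply div_le_den. rewrite Xe. apply Rmult_le_pos; auto. apply Rmult_le_pos. 
      apply Rmult_le_pos. apply pow_le; lra. left; apply exp_pos. apply pow2_ge_0.
      apply pow_lt; lra. apply pow_incr; lra.
    - right. field. lra. }
  eapply Rle_trans; [exact hT|].
  remember (2 + 2 * al) as kk eqn:Ekk.
  assert (hx2 : X * lx <= exp (kk * lx)).
  { apply Rle_trans with (X * x). apply Rmult_le_compat_l; [rewrite Xe; left; apply exp_pos| lra].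
    rewrite Xe. replace (exp ((1 + 2 * al) * lx) * x) with (exp ((1 + 2 * al) * lx) * exp lx)
      by (rewrite Elx, exp_ln; lra).
    rewrite <- exp_plus. right. f_equal. rewrite Ekk. ring. }
  assert (key : kk * lx <= 2 * g * x + kk * ln (kk / (2 * g))).
  { remember (kk / (2 * g)) as y eqn:Ey.
    assert (ypos : 0 < y) by (rewrite Ey; apply Rdiv_lt_0_compat; lra).
    pose proof (ln_le_lin (x / y) ltac:(apply Rdiv_lt_0_compat; lra)).
    unfold Rdiv in H. rewrite ln_mult, ln_Rinv in H by (try apply Rinv_0_lt_compat; lra).
    rewrite <- Elx in H.
    assert (kk * (x * / y) = 2 * g * x) by (rewrite Ey; field; lra).
    assert (kk * lx - kk * ln y <= kk * (x * / y - 1)) by (replace (kk * lx - kk * ln y) with (kk * (lx + - ln y)) by ring; apply Rmult_le_compat_l; lra).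
    lra. }
  replace (X * mx ^ 2 * lx) with ((X * lx) * mx ^ 2) by ring.
  replace (exp (kk * ln (kk / (2 * g))) * (exp (2 * g * x) * mx ^ 2)) with
     (exp (kk * ln (kk / (2 * g)) + 2 * g * x) * mx ^ 2) by (rewrite exp_plus; ring).
  apply Rmult_le_compat_r. apply pow2_ge_0.
  eapply Rle_trans; [exact hx2|]. apply exp_mono. lra.
Qed.


Definition Tii (p g l Rad : R) : R :=
  let A := 4 * (1 + 2 * p) in
  let M := Rmax 1 (/ (2 * g)) in
  let Z := 8 * ln (8 * M) + 5 in
  Rmax (Rmax (exp 1) (A ^ 2)) (Rmax (exp (A * Z)) ((ln (Rad ^ 2 / l)) ^ 2)).

Lemma ii_num p g l Rad L al : 0 <= p -> 0 < g -> 0 < l -> 0 < Rad ->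
  Tii p g l Rad <= L -> 0 < al -> al <= sqrt L / ln L ->
  (1 + 2 * al + 2 * p) * exp (- L / (1 + 2 * al + 2 * p)) / L *
    exp ((2 + 2 * al) * ln ((2 + 2 * al) / (2 * g))) * Rad ^ 2 <= l.
Proof.
  intros hp hg hl hR hT hal hu. unfold Tii in hT.
  remember (4 * (1 + 2 * p)) as A eqn:EA.
  remember (Rmax 1 (/ (2 * g))) as M eqn:EM.
  remember (8 * ln (8 * M) + 5) as Z eqn:EZ.
  remember (ln (Rad ^ 2 / l)) as y eqn:Ey.
  assert (T1 : exp 1 <= L) by (eapply Rle_trans; [|exact hT]; eapply Rle_trans; [apply Rmax_l|apply Rmax_l]).
  assert (T2 : A ^ 2 <= L) by (eapply Rle_trans; [|exact hT]; eapply Rle_trans; [apply Rmax_r|apply Rmax_l]).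
  assert (T3 : exp (A * Z) <= L) by (eapply Rle_trans; [|exact hT]; eapply Rle_trans; [apply Rmax_l|apply Rmax_r]).
  assert (T4 : y ^ 2 <= L) by (eapply Rle_trans; [|exact hT]; eapply Rle_trans; [apply Rmax_r|apply Rmax_r]).
  assert (M1 : 1 <= M) by (rewrite EM; apply Rmax_l).
  assert (M2 : / (2 * g) <= M) by (rewrite EM; apply Rmax_r).
  assert (e1 : 2 <= exp 1) by (pose proof (exp_ineq1_le 1); lra).
  assert (Lpos : 0 < L) by lra.
  remember (sqrt L) as s eqn:Es. remember (ln L) as lam eqn:Elam.
  assert (ss : s * s = L) by (rewrite Es; apply sqrt_sqrt; lra).
  assert (s0 : 0 <= s) by (rewrite Es; apply sqrt_pos).
  assert (lam1 : 1 <= lam) by (rewrite Elam, <- (ln_exp 1); apply ln_le; lra).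
  assert (lamAZ : A * Z <= lam) by (rewrite Elam, <- (ln_exp (A * Z)); apply ln_le; [apply exp_pos|lra]).
  assert (Apos : 4 <= A) by lra.
  assert (sA : A <= s) by (destruct (Rle_lt_dec A s) as [h|h]; auto; nra).
  assert (sy : Rabs y <= s).
  { destruct (Rle_lt_dec (Rabs y) s) as [h|h]; auto.
    assert (y ^ 2 = Rabs y * Rabs y) by (rewrite <- Rabs_mult; simpl; rewrite Rmult_1_r, Rabs_right; [ring| nra]).
    nra. }
  assert (lam2s : lam <= 2 * s).
  { rewrite Elam, Es. apply ln_le_2sqrt; lra. }
  assert (lns : ln s = lam / 2).
  { rewrite Elam, <- ss. rewrite ln_mult by lra. field. }
  remember (s / lam) as u eqn:Eu.
  assert (ulam : u * lam = s) by (rewrite Eu; field; lra).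
  assert (alu : al <= u) by exact hu.
  remember (1 + 2 * al + 2 * p) as a eqn:Ea.
  assert (a1 : 1 <= a) by lra.
  assert (upos : 0 < u) by lra.
  assert (h12u : (1 + 2 * u) * lam <= 4 * s) by nra.
  assert (aA : a * lam <= A * s).
  { apply Rle_trans with ((1 + 2 * p) * (1 + 2 * u) * lam). 
    - apply Rmult_le_compat_r. lra. nra.
    - rewrite EA. nra. }
  remember (2 + 2 * al) as kk eqn:Ekk.
  assert (kk2 : 2 <= kk) by lra.
  assert (kkl : kk * lam <= 8 * s) by nra.
  assert (aL : a / L <= 1).
  { apply Rmult_le_reg_r with L. lra. unfold Rdiv. rewrite Rmult_assoc, Rinv_l by lra.
    rewrite <- ss. nra. }
  assert (La : - L / a <= - (s * lam) / A).
  { unfold Rdiv. rewrite !Ropp_mult_distr_l_reverse. apply Ropp_le_contravar.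
    apply Rmult_le_reg_r with (a * A). nra.
    replace (s * lam * / A * (a * A)) with (s * (a * lam)) by (field; lra).
    replace (L * / a * (a * A)) with (L * A) by (field; lra).
    rewrite <- ss. nra. }
  assert (kM1 : 1 <= kk * M) by nra.
  assert (lnkM0 : 0 <= ln (kk * M)) by (apply ln_nonneg; lra).
  assert (h8M : 0 <= ln (8 * M)) by (apply ln_nonneg; lra).
  assert (hk1 : kk * ln (kk / (2 * g)) <= kk * ln (kk * M)).
  { apply Rmult_le_compat_l. lra. apply ln_le. apply Rdiv_lt_0_compat; lra.
    unfold Rdiv. apply Rmult_le_compat_l; lra. }
  assert (hk2 : ln (kk * M) <= ln (8 * M) + lam / 2).
  { rewrite <- lns, <- ln_mult by lra. apply ln_le. lra.
    assert (kk <= 8 * s) by nra. nra. }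
  assert (hk3 : kk * ln (kk * M) <= s * (8 * ln (8 * M) + 4)).
  { apply Rle_trans with (kk * (ln (8 * M) + lam / 2)). apply Rmult_le_compat_l; lra.
    assert (kk * ln (8 * M) <= 8 * s * ln (8 * M)).
    { assert (kk <= 8 * s) by nra. apply Rmult_le_compat_r; lra. }
    nra. }
  assert (hE : - L / a + kk * ln (kk / (2 * g)) <= - s).
  { assert (- (s * lam) / A <= - s * Z).
    { apply Rmult_le_reg_r with A. lra. unfold Rdiv. rewrite Rmult_assoc, Rinv_l by lra. nra. }
    rewrite EZ in H. lra. }
  assert (hs : exp (- s) * Rad ^ 2 <= l).
  { apply Rle_trans with (exp (- y) * Rad ^ 2).
    apply Rmult_le_compat_r. apply pow2_ge_0. apply exp_mono.
    pose proof (Rle_abs y). lra.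
    rewrite exp_Ropp, Ey, exp_ln. right. field. split; lra.
    apply Rdiv_lt_0_compat. apply pow_lt; lra. lra. }
  replace (a * exp (- L / a) / L * exp (kk * ln (kk / (2 * g))) * Rad ^ 2) with
    (a / L * (exp (- L / a + kk * ln (kk / (2 * g))) * Rad ^ 2)) by (rewrite exp_plus; field; lra).
  apply Rle_trans with (1 * (exp (- s) * Rad ^ 2)).
  apply Rmult_le_compat. apply Rdiv_le_0_compat; lra.
  apply Rmult_le_pos. left; apply exp_pos. apply pow2_ge_0. auto.
  apply Rmult_le_compat_r. apply pow2_ge_0. apply exp_mono; auto.
  lra.
Qed.


Lemma ii_core p C (kappa : nat -> R) : 0 <= p -> 1 <= C ->
  (forall i : nat, (1 <= i)%nat ->
     / C * Rpower (INR i) (- p) <= kappa i /\ kappa i <= C * Rpower (INR i) (- p)) ->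
  forall l g Rad : R, 0 < l -> 0 < g -> 0 < Rad ->
   exists N : nat, forall n : nat, (N <= n)%nat ->
     forall mu : nat -> R, in_l2 mu -> analytic_ball g Rad mu ->
       Rbar_le (Finite (sqrt (ln (INR n)) / ln (ln (INR n)))) (alpha_lower p kappa mu l n).
Proof.
  intros hp hC hk l g Rad hl hg hR.
  destruct (big_ln (Tii p g l Rad)) as [N HN]. exists N.
  intros n hnN mu hmu [hvex hvs].
  destruct (HN n hnN) as [hM hn].
  remember (ln (INR n)) as L eqn:EL.
  assert (e1 : 2 <= exp 1) by (pose proof (exp_ineq1_le 1); lra).
  assert (TL : exp 1 <= L).
  { eapply Rle_trans; [|exact hM]. unfold Tii. eapply Rle_trans; [|apply Rmax_l]. apply Rmax_l. }
  assert (n1 : 1 < INR n).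
  { destruct hn as [h|h]; auto. rewrite <- h, ln_1 in EL. lra. }
  assert (lam1 : 1 <= ln L) by (rewrite <- (ln_exp 1); apply ln_le; lra).
  unfold alpha_lower. rewrite <- EL.
  apply rbar_min_ge.
  - apply glb_ge. intros al [hal hh].
    destruct (Rle_lt_dec (sqrt L / ln L) al) as [h|h]; auto. exfalso.
    destruct (ex_T p C kappa mu n al hp hC hk hmu ltac:(lra) ltac:(lra)) as [hex hnn].
    assert (Pfp : 0 < Pf p n al) by (apply Pf_pos; auto).
    assert (h_fun p kappa mu n al <= (Pf p n al * exp ((2 + 2 * al) * ln ((2 + 2 * al) / (2 * g)))) * Rad ^ 2).
    { apply (h_le p kappa mu n al (fun k => exp (2 * g * INR (S k)) * (mu (S k)) ^ 2)); auto.
      - intro k. rewrite Rmult_assoc. apply Rmult_le_compat_l. lra.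
        destruct (kappa_bounds p C (INR (S k)) (kappa (S k)) hp hC (INR_S_ge1 k) (hk (S k) ltac:(lia))) as [a _].
        apply ii_term; first [apply INR_S_ge1 | lra | auto].
      - apply ball_sq; auto. intro k. apply Rmult_le_pos. left; apply exp_pos. apply pow2_ge_0.
      - apply Rmult_le_pos. lra. left; apply exp_pos. }
    rewrite (Pf_eq p n al L (1 + 2 * al + 2 * p) EL ltac:(lra) eq_refl ltac:(lra)) in H.
    assert (ii_num' := ii_num p g l Rad L al hp hg hl hR hM hal ltac:(lra)).
    lra.
  - simpl. assert (0 <= sqrt L) by apply sqrt_pos.
    apply Rmult_le_reg_r with (ln L). lra. unfold Rdiv. rewrite Rmult_assoc, Rinv_l by lra. nra.
Qed.


Theorem lemma2p1 (p C : R) (kappa : nat -> R)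
  (hp : 0 <= p) (hC : 1 <= C)
  (hkappa : forall i : nat, (1 <= i)%nat ->
     / C * Rpower (INR i) (- p) <= kappa i /\ kappa i <= C * Rpower (INR i) (- p)) :
  (* (i) *)
  (forall l L : R, 0 < l -> 0 < L ->
   forall beta Rad : R, 0 < beta -> 0 < Rad ->
   exists c0 : R, 0 < c0 /\ exists N : nat, forall n : nat, (N <= n)%nat ->
     forall mu : nat -> R, in_l2 mu -> sobolev_ball beta Rad mu ->
       Rbar_le (Finite (beta - c0 / ln (INR n))) (alpha_lower p kappa mu l n)) /\
  (* (ii) *)
  (forall l L : R, 0 < l -> 0 < L ->
   forall gamma Rad : R, 0 < gamma -> 0 < Rad ->
   exists N : nat, forall n : nat, (N <= n)%nat ->
     forall mu : nat -> R, in_l2 mu -> analytic_ball gamma Rad mu ->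
       Rbar_le (Finite (sqrt (ln (INR n)) / ln (ln (INR n)))) (alpha_lower p kappa mu l n)) /\
  (* (iii) *)
  (forall c gamma : R, 0 < c -> 0 < gamma ->
   exists C0 : R, 0 < C0 /\
   forall l L : R, 0 < l -> 0 < L ->
   forall mu : nat -> R, in_l2 mu ->
     (forall i : nat, (1 <= i)%nat -> mu i >= c * Rpower (INR i) (- gamma - 1 / 2)) ->
     exists N : nat, forall n : nat, (N <= n)%nat ->
       Rbar_le (alpha_upper p kappa mu L n)
               (Finite (gamma + C0 * ln (ln (INR n)) / ln (INR n)))) /\
  (* (iv) *)
  (forall l L : R, 0 < l -> 0 < L ->
   forall mu : nat -> R, in_l2 mu ->
     (exists i : nat, (2 <= i)%nat /\ mu i <> 0) ->
     exists N : nat, forall n : nat, (N <= n)%nat ->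
       Rbar_le (alpha_upper p kappa mu L n)
               (Finite (ln (INR n) / (2 * ln 2) - 1 / 2 - p))).
Proof.
  split; [|split; [|split]].
  - intros l L hl hL beta Rad hb hR. apply (i_core p C kappa hp hC hkappa l beta Rad); auto.
  - intros l L hl hL g Rad hg hR. apply (ii_core p C kappa hp hC hkappa l g Rad); auto.
  - intros c g hc hg. exists (3 * (2 + 2 * g + 2 * p)). split. lra.
    intros l L hl hL mu hmu hmuc.
    destruct (iii_core p C kappa mu c g L hp hC hkappa hc hg hL hmu hmuc) as [M HM].
    destruct (big_ln M) as [N HN]. exists N. intros n hn.
    destruct (HN n hn) as [h1 h2].
    destruct (HM n h2 h1) as [a b].
    unfold alpha_upper. eapply glb_le_mem. split; [exact a| exact b]. lra.
  - intros l L hl hL mu hmu [i0 [hi0 hmi0]].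
    assert (hx0 : 2 <= INR i0) by (replace 2 with (INR 2) by (simpl; ring); apply le_INR; auto).
    destruct (iv_core p C (INR i0) (kappa i0) (mu i0) L hp hC hx0 (hkappa i0 ltac:(lia)) hmi0 hL)
      as [M HM].
    destruct (big_ln (Rmax M 1)) as [N HN]. exists N. intros n hn.
    destruct (HN n hn) as [h1 h2].
    assert (hM : M <= ln (INR n)) by (eapply Rle_trans; [apply Rmax_l| exact h1]).
    assert (hL1 : 1 <= ln (INR n)) by (eapply Rle_trans; [apply Rmax_r| exact h1]).
    assert (n1 : 1 < INR n).
    { destruct h2 as [h|h]; auto. rewrite <- h, ln_1 in hL1. lra. }
    destruct (HM n h2 hM) as [a [b c]].
    unfold alpha_upper. eapply glb_le_mem; [|exact b].
    split; auto.
    destruct (ex_T p C kappa mu n ((ln (INR n) / ln (INR i0) - 1 - 2 * p) / 2) hp hC hkappa hmu h2 ltac:(lra))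
      as [hex hnn].
    rewrite h_fun_eq.
    assert (Pfp : 0 < Pf p n ((ln (INR n) / ln (INR i0) - 1 - 2 * p) / 2)) by (apply Pf_pos; auto).
    eapply Rlt_le_trans; [exact c|]. apply Rmult_le_compat_l. lra.
    destruct i0 as [|k0]. lia.
    apply (series_ge_term (fun k => Tm n _ (INR (S k)) (kappa (S k)) (mu (S k))) k0); auto.
Qed.
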